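(* Let $\mathcal{H}$ be a finite-dimensional Hilbert space, $H$ a Hermitian operator (Hamiltonian) on $\mathcal{H}$ with at most three distinct eigenvalues, $\omega>0$, and $X,Y$ Hermitian operators on $\mathcal{H}$ such that the Heisenberg-picture operators $X(t)\coloneqq e^{iHt/\hbar}Xe^{-iHt/\hbar}$, $Y(t)\coloneqq e^{iHt/\hbar}Ye^{-iHt/\hbar}$ satisfy, for all real $t$, $$X(t)=\cos(\omega t)X+\sin(\omega t)Y,\qquad Y(t)=\cos(\omega t)Y-\sin(\omega t)X.$$ Then for every density operator $\rho$ on $\mathcal{H}$, $$\frac13\sum_{k=0}^2\operatorname{tr}\!\Big[\Theta\big(X(\tfrac{2\pi k}{3\omega})\big)\rho\Big]=\frac12.$$ In particular, this holds whenever $\dim\mathcal{H}\le 3$.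
   Context: For a Hermitian operator $A$, $\Theta(A)$ denotes the spectral function of $A$ with $\Theta(a)=1$ for $a>0$, $\Theta(a)=0$ for $a<0$, $\Theta(0)=1/2$. *)

(* Defs.v *)
From HB Require Import structures.
From mathcomp Require Import all_boot all_order all_algebra.
From mathcomp Require Import sesquilinear spectral.
From mathcomp Require Import reals trigo.
From mathcomp Require Import complex.

Set Implicit Arguments.
Unset Strict Implicit.
Unset Printing Implicit Defensive.

Import Order.TTheory GRing.Theory Num.Theory.
Local Open Scope ring_scope.

(* Functional calculus of a normal (in particular Hermitian) matrix:
   f(A) = P^-1 diag(f(l_1),...,f(l_n)) P  where A = P^-1 diag(l) P is the
   unitary spectral decomposition provided by mathcomp's spectral.v. *)
Definition mxfun (C : numClosedFieldType) (n : nat) (f : C -> C)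
    (A : 'M[C]_n) : 'M[C]_n :=
  invmx (spectralmx A) *m diag_mx (map_mx f (spectral_diag A)) *m spectralmx A.

Definition expi (R : realType) (x : R) : R[i] := Complex (cos x) (sin x).

Definition Theta (R : realType) (a : R[i]) : R[i] :=
  if 0 < a then 1 else if a == 0 then 2^-1 else 0.

Definition ThetaMx (R : realType) (n : nat) (A : 'M[R[i]]_n) : 'M[R[i]]_n :=
  mxfun (@Theta R) A.

Definition evol (R : realType) (n : nat) (hbar : R) (H : 'M[R[i]]_n) (t : R)
    : 'M[R[i]]_n :=
  mxfun (fun l : R[i] => expi (complex.Re l * t / hbar)) H.

Definition heis (R : realType) (n : nat) (hbar : R) (H X : 'M[R[i]]_n) (t : R)
    : 'M[R[i]]_n :=
  evol hbar H t *m X *m evol hbar H (- t).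

Definition herm_op (C : numClosedFieldType) (n : nat) (A : 'M[C]_n) : Prop :=
  A \is hermsymmx.

Definition density (C : numClosedFieldType) (n : nat) (rho : 'M[C]_n) : Prop :=
  herm_op rho /\
  (forall v : 'rV[C]_n, 0 <= (v *m rho *m (map_mx Num.conj (v ^T))) 0 0) /\
  \tr rho = 1.

Definition at_most_k_eigenvalues (C : fieldType) (n : nat) (k : nat)
    (A : 'M[C]_n) : Prop :=
  exists s : seq C, (size s <= k)%N /\ forall a, eigenvalue A a -> a \in s.

(* Main.v *)
Require Import Defs.
From HB Require Import structures.
From mathcomp Require Import all_boot all_order all_algebra.
From mathcomp Require Import sesquilinear spectral.
From mathcomp Require Import reals trigo.
From mathcomp Require Import complex.
From mathcomp Require Import ring lra.
Import Order.TTheory GRing.Theory Num.Theory.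
Local Open Scope ring_scope.
Section S.
Context {R : realType}.
Local Notation C := R[i].
Implicit Types (m : nat).

Lemma horner_inter m (A B P : 'M[C]_m.+1) (p : {poly C}) :
  A *m P = P *m B -> horner_mx A p *m P = P *m horner_mx B p.
Proof.
move=> AB; elim/poly_ind: p => [|p c IH]; first by rewrite !rmorph0 mul0mx mulmx0.
rewrite !rmorphD !rmorphM /= !horner_mx_X !horner_mx_C.
rewrite -!mulmxE mulmxDl mulmxDr scalar_mxC; congr (_ + _).
by rewrite -mulmxA AB !mulmxA IH.
Qed.

Lemma horner_conj m (D P : 'M[C]_m.+1) (p : {poly C}) : P \in unitmx ->
  horner_mx (invmx P *m D *m P) p = invmx P *m horner_mx D p *m P.
Proof.
move=> Pu.
have h : horner_mx (invmx P *m D *m P) p *m invmx P = invmx P *m horner_mx D p.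
  by apply: horner_inter; rewrite -!mulmxA mulmxV // mulmx1.
by rewrite -h -[RHS]mulmxA mulVmx // mulmx1.
Qed.

Lemma mxfun_horner m (f : C -> C) (A : 'M[C]_m.+1) (p : {poly C}) :
  A \is normalmx -> (forall i, p.[spectral_diag A 0 i] = f (spectral_diag A 0 i)) ->
  mxfun f A = horner_mx A p.
Proof.
move=> /orthomx_spectralP hA hp.
rewrite /mxfun.
move: (spectral_unit A) hp hA; set P := spectralmx A; set e := spectral_diag A.
move=> Pu hp ->.
rewrite horner_conj // horner_mx_diag.
congr (_ *m diag_mx _ *m _); apply/matrixP => i j; by rewrite !mxE (ord1 i) hp.
Qed.

Definition ev {m} (A : 'M[C]_m) (a : C) := exists2 v : 'rV_m, v *m A = a *: v & v != 0.

Lemma rowv_neq0 {m} (w : 'rV[C]_m) : w != 0 -> exists i, w 0 i != 0.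
Proof.
move=> w0; apply/existsP; rewrite -negb_forall; apply: contra w0 => /forallP h.
by apply/eqP/rowP => i; rewrite mxE; apply/eqP/h.
Qed.

Lemma ev_diag m (P : 'M[C]_m) (e : 'rV[C]_m) a : P \in unitmx ->
  ev (invmx P *m diag_mx e *m P) a -> exists i, a = e 0 i.
Proof.
move=> Pu [v hv v0]; set w := v *m invmx P.
have hw : w *m diag_mx e = a *: w.
  by have := congr1 (mulmx^~ (invmx P)) hv; rewrite /= !mulmxA mulmxK // -scalemxAl.
have w0 : w != 0.
  by apply: contra v0 => /eqP w0; rewrite -(mulmxKV Pu v) -/w w0 mul0mx.
clearbody w; have [i wi] := @rowv_neq0 _ w w0; exists i.
have := congr1 (fun M : 'rV_m => M 0 i) hw; rewrite /= mul_mx_diag !mxE => h.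
by apply: (mulIf wi); rewrite -h mulrC.
Qed.

Lemma ev_diag_conv m (P : 'M[C]_m) (e : 'rV[C]_m) i : P \in unitmx ->
  ev (invmx P *m diag_mx e *m P) (e 0 i).
Proof.
move=> Pu; exists (delta_mx 0 i *m P).
  rewrite !mulmxA mulmxK // scalemxAl; congr (_ *m _).
  apply/matrixP => a b; rewrite mul_mx_diag !mxE (ord1 a) eqxx /=.
  by case: eqP => [->|_]; rewrite ?mulr1n ?mulr0n ?mul1r ?mul0r ?mulr1 ?mulr0.
apply/negP => /eqP h; have := congr1 (fun M => (M *m invmx P) 0 i) h.
by rewrite /= mulmxK // mul0mx !mxE !eqxx /= => /eqP; rewrite oner_eq0.
Qed.

Lemma ev_conj m (U W X : 'M[C]_m) a : W *m U = 1%:M -> U *m W = 1%:M ->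
  ev (U *m X *m W) a -> ev X a.
Proof.
move=> WU UW [v hv v0]; exists (v *m U).
  have := congr1 (mulmx^~ U) hv; rewrite /= !mulmxA -scalemxAl => <-.
  by rewrite -!mulmxA WU mulmx1.
apply: contra v0 => /eqP h; have := congr1 (mulmx^~ W) h.
by rewrite /= -mulmxA UW mulmx1 mul0mx => ->.
Qed.

Lemma interp (s : seq C) (f : C -> C) :
  exists p : {poly C}, forall x, x \in s -> p.[x] = f x.
Proof.
elim: s => [|a s [p hp]]; first by exists 0.
case: (boolP (a \in s)) => ain.
  by exists p => x; rewrite inE => /orP[/eqP->|]; auto.
pose q := \prod_(y <- s) ('X - y%:P).
have qa : q.[a] != 0.
  rewrite horner_prod prodf_seq_neq0; apply/allP => y ys /=.
  by rewrite hornerXsubC subr_eq0; apply: contraNneq ain => ->.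
have qs x : x \in s -> q.[x] = 0.
  move=> xs; apply/eqP; rewrite horner_prod prodf_seq_eq0; apply/hasP.
  by exists x => //=; rewrite hornerXsubC subrr eqxx.
exists (p + ((f a - p.[a]) / q.[a]) *: q) => x; rewrite inE hornerD hornerZ.
case/orP => [/eqP->|xs]; first by rewrite mulfVK // addrC subrK.
by rewrite (qs x xs) mulr0 addr0 hp.
Qed.
Lemma expiD (a b : R) : expi (a + b) = expi a * expi b.
Proof. rewrite /expi cosD sinD. simpc. congr Complex; lra. Qed.
Lemma expi0 : expi (0:R) = 1.
Proof. by rewrite /expi cos0 sin0. Qed.
Lemma expiN (a : R) : expi a * expi (-a) = 1.
Proof. by rewrite -expiD subrr expi0. Qed.
Lemma expi2pi : expi (2 * pi : R) = 1.
Proof. by rewrite /expi mulr_natl cos2pi sin2pi. Qed.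
Lemma expiN2pi : expi (- (2 * pi) : R) = 1.
Proof. by rewrite /expi cosN sinN mulr_natl cos2pi sin2pi oppr0. Qed.
Lemma expipi : expi (pi : R) = - 1.
Proof. rewrite /expi cospi sinpi; apply/eqP; rewrite eq_complex /= ?oppr0 !eqxx. done. Qed.

Lemma expi_inj (a b : R) : (forall t, expi (a * t) = expi (b * t)) -> a = b.
Proof.
move=> h; apply/eqP; apply/negPn/negP => nab.
have nz : a - b != 0 by rewrite subr_eq0.
have e : expi ((a - b) * (pi / (a - b))) = expi 0.
  by rewrite mulrBl expiD h -expiD subrr.
move: e; rewrite mulrC divfK // expipi expi0 => /(congr1 (@complex.Re R)) /=.
lra.
Qed.

Definition w3 : C := expi (2 * pi / 3).
Lemma w3_cube : w3 * w3 * w3 = 1.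
Proof. by rewrite /w3 -!expiD -expi2pi; congr expi; lra. Qed.
Lemma w3_neq1 : w3 != 1.
Proof.
apply/eqP => /(congr1 (@complex.Im R)) /=.
have : 0 < sin (2 * pi / 3 : R).
  by apply: sin_gt0_pi; have := @pi_gt0 R; lra.
lra.
Qed.
Lemma w3_sum : 1 + w3 + w3 * w3 = 0.
Proof.
have e : (1 - w3) * (1 + w3 + w3 * w3) = 1 - w3 * w3 * w3 by ring.
move: e; rewrite w3_cube subrr => /eqP; rewrite mulf_eq0 subr_eq0 eq_sym.
by rewrite (negbTE w3_neq1) /= => /eqP.
Qed.

Lemma sum3 (r : R) : (r == 1) || (r == -1) || (r == 2) || (r == -2) ->
  \sum_(k < 3) expi (r * (2 * pi * (k : nat)%:R / 3)) = 0.
Proof.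
rewrite !big_ord_recr big_ord0 /= add0r.
have W := w3_sum; rewrite /w3 in W.
move/orP => [/orP[/orP[]|]|] /eqP ->.
- transitivity (expi 0 + expi (2*pi/3) + expi (2*pi/3 + 2*pi/3) : C).
    by congr (_ + _ + _); congr expi; lra.
  by rewrite expi0 expiD.
- transitivity (expi 0 + expi (2*pi/3 + 2*pi/3 + -(2*pi)) + expi (2*pi/3 + -(2*pi)) : C).
    by congr (_ + _ + _); congr expi; lra.
  rewrite expi0 !expiD expiN2pi !mulr1 -W; ring.
- transitivity (expi 0 + expi (2*pi/3 + 2*pi/3) + expi (2*pi/3 + 2 * pi) : C).
    by congr (_ + _ + _); congr expi; lra.
  rewrite expi0 !expiD expi2pi !mulr1 -W; ring.
- transitivity (expi 0 + expi (2*pi/3 + -(2*pi)) + expi (2*pi/3 + 2*pi/3 + -(2*pi) + -(2*pi)) : C).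
    by congr (_ + _ + _); congr expi; lra.
  rewrite expi0 !expiD expiN2pi !mulr1 -W; ring.
Qed.

Lemma herm_comb m (X Y : 'M[C]_m) (c s : R) : X \is hermsymmx -> Y \is hermsymmx ->
  (real_complex R c) *: X + (real_complex R s) *: Y \is hermsymmx.
Proof.
move=> /is_hermitianmxP hX /is_hermitianmxP hY; apply/is_hermitianmxP.
rewrite expr0 scale1r in hX; rewrite expr0 scale1r in hY; rewrite expr0 scale1r.
apply/matrixP => a b.
have := congr1 (fun M : 'M[C]_m => M a b) hX; have := congr1 (fun M : 'M[C]_m => M a b) hY.
have hr (x : R) : real_complex R x \is Num.real by rewrite complex_real.
rewrite !mxE => -> ->.
by rewrite rmorphD !rmorphM /= !(conj_Creal (hr _)).
Qed.

Lemma Theta_sum (e : C) : e \is Num.real -> Theta (- e) + Theta e = 1.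
Proof.
move=> he; rewrite /Theta oppr_gt0 oppr_eq0.
case: (real_ltgtP (real0 _) he) => _; rewrite ?add0r ?addr0 //.
by rewrite -mulr2n -[_ *+ 2]mulr_natr mulVf // pnatr_eq0.
Qed.

Lemma horner_conj2 m (A D D' : 'M[C]_m.+1) p : D' *m D = 1%:M -> D *m D' = 1%:M ->
  horner_mx (D *m A *m D') p = D *m horner_mx A p *m D'.
Proof.
move=> h1 h2.
have h : horner_mx (D *m A *m D') p *m D = D *m horner_mx A p.
  by apply: horner_inter; rewrite -mulmxA h1 mulmx1.
by rewrite -h -[RHS]mulmxA h2 mulmx1.
Qed.

Lemma four (s : seq C) (a b c e : C) : (size s <= 3)%N ->
  a \in s -> b \in s -> c \in s -> e \in s ->
  complex.Re a != complex.Re b -> complex.Re a != complex.Re c ->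
  complex.Re a != complex.Re e -> complex.Re b != complex.Re c ->
  complex.Re b != complex.Re e -> complex.Re c != complex.Re e -> False.
Proof.
move=> hs ha hb hc he n1 n2 n3 n4 n5 n6.
have U : uniq [:: a; b; c; e].
  have neq (x y : C) : complex.Re x != complex.Re y -> x != y.
    by move=> h; apply: contraNneq h => ->.
  by rewrite /= !inE !negb_or (neq _ _ n1) (neq _ _ n2) (neq _ _ n3) (neq _ _ n4) (neq _ _ n5) (neq _ _ n6).
have h4 : (size [:: a; b; c; e] <= size s)%N.
  apply: (uniq_leq_size U) => x; rewrite !inE.
  by move=> /orP[/eqP->|/orP[/eqP->|/orP[/eqP->|/eqP->]]].
by have := leq_trans h4 hs.
Qed.

Definition gb (b h x : R) := (x == b) || (x == b + h) || (x == b - h).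

Ltac contra_neq := first [ lra | match goal with H : is_true (_ != _) |- _ => move/eqP: H; apply; lra end ].

Lemma glemma (a b u v h : R) : 0 < h -> a - b != 0 -> a - b != h -> a - b != -h ->
  a - b != 2 * h -> a - b != - (2 * h) -> (u - v = h \/ u - v = -h) ->
  (u != a -> u != b -> v != a -> v != b -> False) -> gb b h u -> gb b h v.
Proof.
move=> hp n0 n1 n2 n3 n4 huv F.
rewrite /gb => /orP[/orP[]|] /eqP ux; case: huv => huv;
first [ (apply/orP; left; apply/orP; left; apply/eqP; lra)
      | (apply/orP; left; apply/orP; right; apply/eqP; lra)
      | (apply/orP; right; apply/eqP; lra)
      | (exfalso; apply: F; apply/eqP => E; contra_neq) ].
Qed.

Definition Dmx_def m (hbar t : R) (d : 'rV[C]_m) : 'M[C]_m :=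
  diag_mx (map_mx (fun l : C => expi (complex.Re l * t / hbar)) d).
Fact Dmx_key : unit. Proof. exact: tt. Qed.
Definition Dmx {m} := locked_with Dmx_key (@Dmx_def m).
Lemma DmxE m (hbar t : R) (d : 'rV[C]_m) :
  Dmx hbar t d = diag_mx (map_mx (fun l : C => expi (complex.Re l * t / hbar)) d).
Proof. by rewrite /Dmx unlock. Qed.

Lemma Dmx_entry m (hbar t : R) (d : 'rV[C]_m) (M : 'M[C]_m) i j :
  (Dmx hbar t d *m M *m Dmx hbar (-t) d) i j =
  expi ((complex.Re (d 0 i) - complex.Re (d 0 j)) * t / hbar) * M i j.
Proof.
rewrite !DmxE mul_mx_diag mxE mul_diag_mx !mxE mulrC mulrA -expiD; congr (expi _ * _).
by rewrite /=; ring.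
Qed.

Lemma Dmx_inv m (hbar t : R) (d : 'rV[C]_m) : Dmx hbar t d *m Dmx hbar (-t) d = 1%:M.
Proof.
apply/matrixP => i j; rewrite -[Dmx hbar t d](mulmx1) Dmx_entry !mxE.
by case: eqP => [->|]; rewrite ?subrr ?mul0r ?expi0 ?mulr1 ?mulr0.
Qed.

Lemma Dmx_inv' m (hbar t : R) (d : 'rV[C]_m) : Dmx hbar (-t) d *m Dmx hbar t d = 1%:M.
Proof. by rewrite -{2}(opprK t) Dmx_inv. Qed.

End S.
Arguments ev_diag {R m P e a}.
Arguments ev_diag_conv {R m P e} i.
Lemma ev_spec {R : realType} m (A : 'M[R[i]]_m) i : A \is normalmx -> ev A (spectral_diag A 0 i).
Proof. move=> /orthomx_spectralP hd; rewrite {1}hd; exact: ev_diag_conv (spectral_unit A). Qed.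
Lemma expiE {R : realType} (a : R) : expi a = (real_complex R (cos a)) + 'i%C * (real_complex R (sin a)).
Proof. rewrite /expi; simpc. by []. Qed.
Lemma diag_comm {R : realType} m (M : 'M[R[i]]_m) (g : 'I_m -> bool) :
  (forall k l, M k l != 0 -> g k = g l) ->
  diag_mx (\row_k ((g k)%:R : R[i])) *m M = M *m diag_mx (\row_k ((g k)%:R : R[i])).
Proof.
move=> h; apply/matrixP => k l; rewrite mul_diag_mx mul_mx_diag !mxE.
case: (eqVneq (M k l) 0) => [->|nz]; first by rewrite mulr0 mul0r.
by rewrite (h k l nz) mulrC.
Qed.
Lemma diag_comm_entry {R : realType} m (M : 'M[R[i]]_m) (g : 'I_m -> bool) i j :
  diag_mx (\row_k ((g k)%:R : R[i])) *m M = M *m diag_mx (\row_k ((g k)%:R : R[i])) ->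
  g i = false -> g j = true -> M i j = 0.
Proof.
move=> h gi gj; have := congr1 (fun A : 'M[R[i]]_m => A i j) h.
by rewrite /= mul_diag_mx mul_mx_diag !mxE gi gj /= mulr0n mulr1n mul0r mulr1 => <-.
Qed.

Local Opaque spectralmx spectral_diag expi cos sin Theta.
Section M.
Variable R : realType.
Local Notation C := R[i].

Lemma conj_inv m (Q D D' : 'M[C]_m.+1) : Q \in unitmx -> D *m D' = 1%:M ->
  (invmx Q *m D *m Q) *m (invmx Q *m D' *m Q) = 1%:M.
Proof.
move=> Qu h; rewrite !mulmxA mulmxK // -(mulmxA _ D) h mulmx1 mulVmx //.
Qed.

Lemma main_m (m : nat) (hbar omega : R) (H X Y : 'M[C]_m.+1) :
  0 < hbar -> 0 < omega ->
  herm_op H -> at_most_k_eigenvalues 3 H ->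
  herm_op X -> herm_op Y ->
  (forall t : R, heis hbar H X t =
     (real_complex R (cos (omega * t))) *: X + (real_complex R (sin (omega * t))) *: Y) ->
  (forall t : R, heis hbar H Y t =
     (real_complex R (cos (omega * t))) *: Y - (real_complex R (sin (omega * t))) *: X) ->
  forall rho : 'M[R[i]]_m.+1, density rho ->
    3^-1 * \sum_(k < 3)
      \tr (ThetaMx (heis hbar H X (2 * pi * k%:R / (3 * omega))) *m rho)
    = 2^-1.
Proof.
move=> hb hw hH [s [hs hsH]] hXh hYh hX hY rho [_ [_ trr]].
have hb0 : hbar != 0 by rewrite gt_eqF.
have hw0 : omega != 0 by rewrite gt_eqF.
have /orthomx_spectralP hHd := hermitian_normalmx hH.
have /orthomx_spectralP hXd := hermitian_normalmx hXh.
have Qu := spectral_unit H.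
move: hHd Qu; set Q := spectralmx H; set d := spectral_diag H => hHd Qu.
pose δ k := complex.Re (d 0 k).
have evolE t : evol hbar H t = invmx Q *m Dmx hbar t d *m Q by rewrite /evol /mxfun DmxE.
have heisE M t : heis hbar H M t =
    invmx Q *m (Dmx hbar t d *m (Q *m M *m invmx Q) *m Dmx hbar (-t) d) *m Q.
  by rewrite /heis !evolE !mulmxA.
have conjQ M : Q *m (invmx Q *m M *m Q) *m invmx Q = M.
  by rewrite !mulmxA mulmxV // mul1mx mulmxK.
set Xp := Q *m X *m invmx Q; set Yp := Q *m Y *m invmx Q.
have hXp t : Dmx hbar t d *m Xp *m Dmx hbar (-t) d =
    (real_complex R (cos (omega * t))) *: Xp + (real_complex R (sin (omega * t))) *: Yp.
  have := congr1 (fun M => Q *m M *m invmx Q) (hX t); rewrite /= heisE conjQ => ->.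
  by rewrite mulmxDr mulmxDl -!scalemxAr -!scalemxAl.
have hYp t : Dmx hbar t d *m Yp *m Dmx hbar (-t) d =
    (real_complex R (cos (omega * t))) *: Yp - (real_complex R (sin (omega * t))) *: Xp.
  have := congr1 (fun M => Q *m M *m invmx Q) (hY t); rewrite /= heisE conjQ => ->.
  by rewrite mulmxBr mulmxBl -!scalemxAr -!scalemxAl.
pose E := map (fun i => spectral_diag X 0 i) (enum 'I_m.+1).
have [p hp] := interp (E ++ map -%R E) (@Theta R).
pose T := horner_mx Xp p.
have inE' a : ev X a -> a \in E.
  rewrite {1}hXd => h; have [j ->] := ev_diag (spectral_unit X) h.
  by apply: map_f; rewrite mem_enum.
have Th t : ThetaMx (heis hbar H X t) =
    invmx Q *m (Dmx hbar t d *m T *m Dmx hbar (-t) d) *m Q.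
  have hn : heis hbar H X t \is normalmx.
    by rewrite hX; apply/hermitian_normalmx/herm_comb.
  rewrite /ThetaMx (@mxfun_horner _ _ _ _ p hn).
    rewrite heisE; rewrite horner_conj; last exact: Qu.
    by rewrite horner_conj2; [ | exact: Dmx_inv' | exact: Dmx_inv].
  move=> i; apply: hp; rewrite mem_cat; apply/orP; left; apply: inE'.
  apply: (@ev_conj _ _ (evol hbar H t) (evol hbar H (-t))).
  - by rewrite !evolE conj_inv // Dmx_inv'.
  - by rewrite !evolE conj_inv // Dmx_inv.
  by have := @ev_spec _ _ _ i hn; rewrite /heis.
have hpi : Dmx hbar (pi / omega) d *m Xp *m Dmx hbar (- (pi / omega)) d = - Xp.
  rewrite hXp (_ : omega * (pi / omega) = pi); last by rewrite mulrCA divff ?mulr1.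
  by rewrite cospi sinpi rmorphN1 rmorph0 scaleN1r scale0r addr0.
have hc M : horner_mx (Q *m M *m invmx Q) p = Q *m horner_mx M p *m invmx Q.
  have h := @horner_conj R m M (invmx Q) p; rewrite invmxK in h; apply: h.
  by rewrite unitmx_inv.
move: hXd; set Px := spectralmx X; set e := spectral_diag X => hXd.
have Pxu : Px \in unitmx by exact: spectral_unit.
have inE1 a : e 0 a \in E by apply: (map_f (fun i => e 0 i)); rewrite mem_enum.
have er a : e 0 a \is Num.real.
  by have := mxOverP (hermitian_spectral_diag_real hXh); apply.
have hsumX : horner_mx (- X) p + horner_mx X p = 1%:M.
  have hnX : - X = invmx Px *m diag_mx (- e) *m Px.
    by rewrite [in LHS]hXd raddfN /= mulmxN mulNmx.
  rewrite hnX [Z in _ + horner_mx Z p]hXd.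
  rewrite horner_conj; last exact: Pxu.
  rewrite horner_conj; last exact: Pxu.
  rewrite !horner_mx_diag -mulmxDl -mulmxDr.
  have -> : diag_mx (map_mx (horner p) (- e)) + diag_mx (map_mx (horner p) e) = 1%:M.
    apply/matrixP => a b; rewrite !mxE -mulrnDl.
    rewrite hp; last by rewrite mem_cat (map_f _ (inE1 a)) orbT.
    rewrite hp; last by rewrite mem_cat inE1.
    by rewrite Theta_sum.
  by rewrite mulmx1 mulVmx.
have hsum : horner_mx (- Xp) p + T = 1%:M.
  rewrite /T /Xp -mulNmx -mulmxN !hc -mulmxDl -mulmxDr hsumX mulmx1.
  exact: mulmxV.
have T2 i j : complex.Re (d 0 i) = complex.Re (d 0 j) -> T i j = (i == j)%:R / 2.
  move=> e0.
  have := congr1 (fun M : 'M[C]_m.+1 => M i j) hsum.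
  rewrite -hpi horner_conj2; [ | exact: Dmx_inv' | exact: Dmx_inv].
  rewrite /= mxE Dmx_entry e0 subrr !mul0r expi0 mul1r mxE.
  move=> <-; rewrite -mulr2n -[_ *+ 2]mulr_natr mulfK //.
  by rewrite pnatr_eq0.
have T3 i j : Xp i j != 0 ->
    complex.Re (d 0 i) - complex.Re (d 0 j) = hbar * omega \/
    complex.Re (d 0 i) - complex.Re (d 0 j) = - (hbar * omega).
  move=> x0.
  pose θ := (complex.Re (d 0 i) - complex.Re (d 0 j)) / hbar.
  have ea t : (complex.Re (d 0 i) - complex.Re (d 0 j)) * t / hbar = θ * t.
    by rewrite /θ mulrAC.
  have hE t : expi (θ * t) * Xp i j =
      (real_complex R (cos (omega * t))) * Xp i j + (real_complex R (sin (omega * t))) * Yp i j.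
    have := congr1 (fun M : 'M[C]_m.+1 => M i j) (hXp t).
    by rewrite /= Dmx_entry ea => ->; rewrite !mxE.
  have hF t : expi (θ * t) * Yp i j =
      (real_complex R (cos (omega * t))) * Yp i j - (real_complex R (sin (omega * t))) * Xp i j.
    have := congr1 (fun M : 'M[C]_m.+1 => M i j) (hYp t).
    by rewrite /= Dmx_entry ea => ->; rewrite !mxE.
  have hi : 'i%C * 'i%C = -1 :> C by rewrite -expr2 sqr_i.
  move: x0 hE hF; set x := Xp i j; set y := Yp i j => x0 hE hF.
  have key t : expi (θ * t) * (x + 'i%C * y) = expi ((- omega) * t) * (x + 'i%C * y).
    rewrite mulrDr (mulrCA (expi (θ * t)) 'i%C y) hE hF (expiE ((- omega) * t)).
    rewrite mulNr cosN sinN rmorphN.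
    set c := real_complex R (cos (omega * t)); set s' := real_complex R (sin (omega * t)).
    rewrite (_ : (c + 'i%C * - s') * (x + 'i%C * y) =
       c * x + s' * y + 'i%C * (c * y - s' * x) - s' * y * ('i%C * 'i%C + 1)); last by ring.
    by rewrite hi addNr mulr0 subr0.
  have key2 t : expi (θ * t) * (x - 'i%C * y) = expi (omega * t) * (x - 'i%C * y).
    rewrite mulrBr (mulrCA (expi (θ * t)) 'i%C y) hE hF (expiE (omega * t)).
    set c := real_complex R (cos (omega * t)); set s' := real_complex R (sin (omega * t)).
    rewrite (_ : (c + 'i%C * s') * (x - 'i%C * y) =
       c * x + s' * y - 'i%C * (c * y - s' * x) - s' * y * ('i%C * 'i%C + 1)); last by ring.
    by rewrite hi addNr mulr0 subr0.
  case: (eqVneq (x + 'i%C * y) 0) => hz.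
  - have hw' : x - 'i%C * y != 0.
      apply: contra x0 => /eqP hm0; apply/eqP.
      have : x *+ 2 = (x + 'i%C * y) + (x - 'i%C * y) by rewrite mulr2n; ring.
      by rewrite hz hm0 addr0 => /eqP; rewrite mulrn_eq0 /= => /eqP.
    left; have eθ : θ = omega.
      by apply: expi_inj => t; apply: (mulIf hw'); exact: key2.
    by rewrite -(divfK hb0 (complex.Re (d 0 i) - complex.Re (d 0 j))) -/θ eθ mulrC.
  - right; have eθ : θ = - omega.
      by apply: expi_inj => t; apply: (mulIf hz); exact: key.
    by rewrite -(divfK hb0 (complex.Re (d 0 i) - complex.Re (d 0 j))) -/θ eθ mulNr mulrC.
have evd k : d 0 k \in s.
  apply: hsH; apply/eigenvalueP; rewrite [in X in exists2 v, v *m X = _ & _]hHd.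
  exact: ev_diag_conv k Qu.
have T4 i j : complex.Re (d 0 i) - complex.Re (d 0 j) != 0 ->
    complex.Re (d 0 i) - complex.Re (d 0 j) != hbar * omega ->
    complex.Re (d 0 i) - complex.Re (d 0 j) != - (hbar * omega) ->
    complex.Re (d 0 i) - complex.Re (d 0 j) != 2 * (hbar * omega) ->
    complex.Re (d 0 i) - complex.Re (d 0 j) != - (2 * (hbar * omega)) -> T i j = 0.
  move=> n0 n1 n2 n3 n4.
  have hp0 : 0 < hbar * omega by rewrite mulr_gt0.
  pose g k := gb (complex.Re (d 0 j)) (hbar * omega) (complex.Re (d 0 k)).
  have GX : diag_mx (\row_k ((g k)%:R : C)) *m Xp = Xp *m diag_mx (\row_k ((g k)%:R : C)).
    apply: diag_comm => k l nz.
    have huv := T3 k l nz.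
    have F : complex.Re (d 0 k) != complex.Re (d 0 i) ->
        complex.Re (d 0 k) != complex.Re (d 0 j) ->
        complex.Re (d 0 l) != complex.Re (d 0 i) ->
        complex.Re (d 0 l) != complex.Re (d 0 j) -> False.
      move=> a1 a2 a3 a4.
      apply: (four _ _ _ _ _ hs (evd i) (evd j) (evd k) (evd l)).
      - by rewrite -subr_eq0.
      - by rewrite eq_sym.
      - by rewrite eq_sym.
      - by rewrite eq_sym.
      - by rewrite eq_sym.
      - apply/eqP => Ekl; case: huv; rewrite Ekl; lra.
    apply/idP/idP => hg.
    + exact: (glemma _ _ _ _ _ hp0 n0 n1 n2 n3 n4 huv F hg).
    + have huv' : complex.Re (d 0 l) - complex.Re (d 0 k) = hbar * omega \/
                 complex.Re (d 0 l) - complex.Re (d 0 k) = - (hbar * omega).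
        by case: huv => ?; [right|left]; lra.
      have F' : complex.Re (d 0 l) != complex.Re (d 0 i) ->
        complex.Re (d 0 l) != complex.Re (d 0 j) ->
        complex.Re (d 0 k) != complex.Re (d 0 i) ->
        complex.Re (d 0 k) != complex.Re (d 0 j) -> False.
        by move=> b1 b2 b3 b4; exact: F b3 b4 b1 b2.
      exact: (glemma _ _ _ _ _ hp0 n0 n1 n2 n3 n4 huv' F' hg).
  have GT : diag_mx (\row_k ((g k)%:R : C)) *m T = T *m diag_mx (\row_k ((g k)%:R : C)).
    exact: comm_mx_horner GX.
  have gj : g j = true by rewrite /g /gb eqxx.
  have gi : g i = false.
    rewrite /g /gb; apply/negbTE; rewrite !negb_or.
    apply/andP; split; [apply/andP; split|]; apply/eqP => Eg.
    - by move/eqP: n0; apply; lra.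
    - by move/eqP: n1; apply; lra.
    - by move/eqP: n2; apply; lra.
  exact: (diag_comm_entry _ _ _ _ _ GT gi gj).
have S3 : \sum_(k < 3) (Dmx hbar (2 * pi * k%:R / (3 * omega)) d *m T *m
      Dmx hbar (- (2 * pi * k%:R / (3 * omega))) d) = (3 / 2 : C)%:M.
  apply/matrixP => i j; rewrite summxE [RHS]mxE.
  under eq_bigr do rewrite Dmx_entry.
  rewrite -big_distrl /=.
  case: (eqVneq (complex.Re (d 0 i) - complex.Re (d 0 j)) 0) => a0.
  - have e0 : complex.Re (d 0 i) = complex.Re (d 0 j).
      by apply/eqP; rewrite -subr_eq0 a0.
    rewrite (T2 i j e0) a0 !big_ord_recr big_ord0 /= !mul0r expi0.
    by case: (i == j) => /=; rewrite ?mulr1n ?mulr0n; ring.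
  - have ij : (i == j) = false.
      by apply/negbTE; apply: contra a0 => /eqP eij; rewrite eij subrr.
    rewrite ij mulr0n.
    case: (boolP [|| complex.Re (d 0 i) - complex.Re (d 0 j) == hbar * omega,
                     complex.Re (d 0 i) - complex.Re (d 0 j) == - (hbar * omega),
                     complex.Re (d 0 i) - complex.Re (d 0 j) == 2 * (hbar * omega) |
                     complex.Re (d 0 i) - complex.Re (d 0 j) == - (2 * (hbar * omega))]) => hcs.
    + have Hs (r : R) : (r == 1) || (r == -1) || (r == 2) || (r == -2) ->
          complex.Re (d 0 i) - complex.Re (d 0 j) = r * (hbar * omega) ->
          \sum_(k < 3) expi ((complex.Re (d 0 i) - complex.Re (d 0 j)) *
              (2 * pi * k%:R / (3 * omega)) / hbar) = 0.
        move=> hr ea.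
        transitivity (\sum_(k < 3) expi (r * (2 * pi * (k : nat)%:R / 3)) : C); last exact: sum3 _ hr.
        apply: eq_bigr => k _; congr expi.
        rewrite ea; field.
        by rewrite hb0 hw0.
      suff -> : \sum_(k < 3) expi ((complex.Re (d 0 i) - complex.Re (d 0 j)) *
              (2 * pi * k%:R / (3 * omega)) / hbar) = 0 by rewrite mul0r.
      case/or4P: hcs => /eqP hq.
      * by apply: (Hs 1); [rewrite eqxx | rewrite hq; ring].
      * by apply: (Hs (-1)); [rewrite eqxx orbT | rewrite hq; ring].
      * by apply: (Hs 2); [rewrite eqxx orbT | rewrite hq; ring].
      * by apply: (Hs (-2)); [rewrite eqxx orbT | rewrite hq; ring].
    + rewrite !negb_or in hcs; case/and4P: hcs => n1 n2 n3 n4.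
      by rewrite (T4 i j a0 n1 n2 n3 n4) mulr0.
under eq_bigr do rewrite Th.
rewrite -raddf_sum /= -mulmx_suml -mulmx_suml -mulmx_sumr S3.
rewrite mul_mx_scalar -scalemxAl mulVmx; last exact: Qu.
rewrite scalemx1 mul_scalar_mx mxtraceZ trr mulr1.
by rewrite mulrA mulVf ?mul1r // pnatr_eq0.
Qed.
End M.

Theorem mainTheorem3 (R : realType) (n : nat) (hbar omega : R)
  (H X Y : 'M[R[i]]_n) :
  0 < hbar -> 0 < omega ->
  herm_op H -> at_most_k_eigenvalues 3 H ->
  herm_op X -> herm_op Y ->
  (forall t : R, heis hbar H X t =
     (real_complex R (cos (omega * t))) *: X + (real_complex R (sin (omega * t))) *: Y) ->
  (forall t : R, heis hbar H Y t =
     (real_complex R (cos (omega * t))) *: Y - (real_complex R (sin (omega * t))) *: X) ->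
  forall rho : 'M[R[i]]_n, density rho ->
    3^-1 * \sum_(k < 3)
      \tr (ThetaMx (heis hbar H X (2 * pi * k%:R / (3 * omega))) *m rho)
    = 2^-1.
Proof.
case: n H X Y => [|m] H X Y hb hw hH h3 hXh hYh hX hY rho hrho.
  case: hrho => _ [_]; rewrite /mxtrace big_ord0 => /eqP.
  by rewrite eq_sym oner_eq0.
exact: (@main_m R m hbar omega H X Y hb hw hH h3 hXh hYh hX hY rho hrho).
Qed.
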